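(* In the setting below with integral arrivals ($T=m$, $q_{tj}=1/m$) and running Algorithm RAND-ORDER($\alpha$) with $\alpha\ge1$, for every customer type $j$, every assortment $S\in\mathcal{S}$ and every item $i\in S$: conditional on at least one customer of type $j$ arriving, the probability that item $i$ has already been shown to customer $t_j$ (i.e., was contained in an assortment offered to her) before the algorithm reaches $S$ in the ordering $\pi$ used for customer $t_j$ is at most $\frac{1}{2\alpha}$. Here $t_j$ denotes the first customer of type $j$ to arrive.
   Context: Multi-stage multi-customer assortment problem without repeated offerings. There are $n$ items, each with one unit of inventory, $m$ customer types and $T$ time-steps; in time-step $t$, independently, a customer of type $j$ arrives with probability $q_{tj}\ge0$ ($\sum_jq_{tj}\le1$). $\mathcal{S}$ is a downward-closed family of subsets of $\{1,\dots,n\}$. For each type $j$, $S\in\mathcal{S}$, $i\in S$, $p_j(i,S)\ge0$ is the probability that a type-$j$ customer offered $S$ purchases $i$, with $\sum_{i\in S}p_j(i,S)\le1$; substitutability: $p_j(i,S)\ge p_j(i,S\cup\{i'\})$ for $i'\ne i$. Type $j$ has patience $\ell_j\in\mathbb{Z}_{>0}$: an arriving type-$j$ customer is shown a sequence of at most $\ell_j$ pairwise disjoint assortments from $\mathcal{S}$ of currently available items; at each stage her purchase decision follows the choice probabilities independently of everything else; she leaves upon a purchase or when the sequence ends. MCDLP-NR is the LP: maximize $\sum_{t=1}^T\sum_{j=1}^mq_{tj}\sum_{S\in\mathcal{S}}x_j(S)\sum_{i\in S}r_{ij}p_j(i,S)$ subject to $\sum_{t}\sum_{j}q_{tj}\sum_{S\ni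 i}x_j(S)p_j(i,S)\le1$ for all $i$; $\sum_{S}x_j(S)\sum_{i\in S}p_j(i,S)\le1$ for all $j$; $\sum_{S}x_j(S)\le\ell_j$ for all $j$; $\sum_{S\ni i}x_j(S)\le1$ for all $i,j$; $x\ge0$ (with $r_{ij}\ge 0$ revenues). Algorithm RAND-ORDER($\alpha$), for a parameter $\alpha\ge1$: solve MCDLP-NR for an optimal $x^*$. When a customer of type $j$ arrives at time $t$: if some earlier customer had type $j$, offer her nothing. Otherwise draw a uniformly random ordering $\pi$ of $\mathcal{S}$ and go through the assortments $S$ in the order $\pi$; for each $S$, independently with probability $x^*_j(S)/\alpha$, offer (as one stage) the assortment $S$ with all sold-out items and all items previously shown to this customer removed; stop as soon as the customer purchases an item or $\ell_j$ assortments have been offered. *)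

(* Defs.v *)
From HB Require Import structures.
From mathcomp Require Import all_boot all_order all_algebra.
Set Implicit Arguments. Unset Strict Implicit. Unset Printing Implicit Defensive.
Import Order.TTheory GRing.Theory Num.Theory.
Local Open Scope ring_scope.

Section Dist.
Variable R : realFieldType.

Definition dist (A : Type) := seq (R * A).

Definition dret (A : Type) (a : A) : dist A := [:: (1, a)].

Definition dbind (A B : Type) (d : dist A) (f : A -> dist B) : dist B :=
  flatten [seq [seq (w.1 * v.1, v.2) | v <- f w.2] | w <- d].

Definition dcoin (q : R) : dist bool := [:: (q, true); (1 - q, false)].

Definition duniform (A : Type) (l : seq A) : dist A :=
  [seq ((size l)%:R^-1, a) | a <- l].

Definition dprob (A : Type) (d : dist A) (E : A -> bool) : R :=
  \sum_(w <- d) (if E w.2 then w.1 else 0).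

Definition dcondprob (A : Type) (d : dist A) (E C : A -> bool) : R :=
  dprob d (fun a => E a && C a) / dprob d C.
End Dist.

Section Model.
Variable R : realFieldType.
Variables (n m : nat).
Variable Sfam : {set {set 'I_n}}.
(* choice probabilities: p j i S = p_j(i,S) *)
Variable p : 'I_m -> 'I_n -> {set 'I_n} -> R.

Definition downward_closed_nonempty : Prop :=
  set0 \notin Sfam /\
  forall S S' : {set 'I_n}, S \in Sfam -> S' \subset S -> S' != set0 -> S' \in Sfam.

Definition choice_model : Prop :=
  (forall j S i, S \in Sfam -> i \in S -> 0 <= p j i S) /\
  (forall j S, S \in Sfam -> \sum_(i in S) p j i S <= 1) /\
  (forall j S i i', S \in Sfam -> S :|: [set i'] \in Sfam -> i \in S -> i' != i ->
      p j i (S :|: [set i']) <= p j i S).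

Variables (T : nat) (q : 'I_T -> 'I_m -> R) (r : 'I_n -> 'I_m -> R) (ell : 'I_m -> nat).

Definition lp_objective (x : 'I_m -> {set 'I_n} -> R) : R :=
  \sum_(t < T) \sum_(j < m) q t j *
     \sum_(S in Sfam) x j S * \sum_(i in S) r i j * p j i S.

Definition lp_feasible (x : 'I_m -> {set 'I_n} -> R) : Prop :=
  (forall j S, S \in Sfam -> 0 <= x j S) /\
  (forall i, \sum_(t < T) \sum_(j < m) q t j *
       \sum_(S in Sfam | i \in S) x j S * p j i S <= 1) /\
  (forall j, \sum_(S in Sfam) x j S * \sum_(i in S) p j i S <= 1) /\
  (forall j, \sum_(S in Sfam) x j S <= (ell j)%:R) /\
  (forall i j, \sum_(S in Sfam | i \in S) x j S <= 1).

Definition lp_optimal (x : 'I_m -> {set 'I_n} -> R) : Prop :=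
  lp_feasible x /\ forall y, lp_feasible y -> lp_objective y <= lp_objective x.
End Model.

Section Algorithm.
Variable R : realFieldType.
Variables (n m : nat).
Variable Sfam : {set {set 'I_n}}.
Variable p : 'I_m -> 'I_n -> {set 'I_n} -> R.
Variable x : 'I_m -> {set 'I_n} -> R.
Variable alpha : R.
Variable ell : 'I_m -> nat.
(* the tracked assortment S0 (we record the set of items shown before reaching it) *)
Variable S0 : {set 'I_n}.

Definition purchase (j : 'I_m) (A : {set 'I_n}) : dist R (option 'I_n) :=
  [seq (p j i A, Some i) | i <- enum A] ++
  [:: (1 - \sum_(i in A) p j i A, None)].

(* State: items shown so far, number of stages offered so far,
   and the snapshot of the shown set at the moment S0 is reached in pi.
   Output: (purchased item, final shown set, snapshot). *)
Fixpoint session (j : 'I_m) (avail : {set 'I_n}) (pi : seq {set 'I_n})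
    (shown : {set 'I_n}) (k : nat) (snap : option {set 'I_n})
    : dist R (option 'I_n * {set 'I_n} * option {set 'I_n}) :=
  match pi with
  | [::] => dret R (None, shown, snap)
  | Sa :: pi' =>
    if (ell j <= k)%N then dret R (None, shown, snap) else
    let snap' := if Sa == S0 then Some shown else snap in
    dbind (dcoin (x j Sa / alpha)) (fun b =>
      if b then
        let A := (Sa :&: avail) :\: shown in
        dbind (purchase j A) (fun o =>
          match o with
          | Some it => dret R (Some it, shown :|: A, snap')
          | None => session j avail pi' (shown :|: A) k.+1 snap'
          end)
      else session j avail pi' shown k snap')
  end.

(* the item i0 has been shown before S0 is reached (if the session stopped
   before reaching S0, the whole set of shown items counts) *)
Definition shown_before (i0 : 'I_n)
    (res : option 'I_n * {set 'I_n} * option {set 'I_n}) : bool :=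
  i0 \in odflt res.1.2 res.2.

(* Global state: available items, types already arrived, and the observation
   for the first type-j0 customer (None while no type-j0 customer arrived). *)
Definition gstate := ({set 'I_n} * {set 'I_m} * option bool)%type.

Definition step (j0 : 'I_m) (i0 : 'I_n) (st : gstate) : dist R gstate :=
  let: (avail, seen, obs) := st in
  dbind (duniform R (enum 'I_m)) (fun j =>
    if j \in seen then dret R st else
    dbind (duniform R (permutations (enum Sfam))) (fun pi =>
      dbind (session j avail pi set0 0 None) (fun res =>
        let avail' := if res.1.1 is Some it then avail :\ it else avail in
        let obs' := if j == j0 then Some (shown_before i0 res) else obs in
        dret R (avail', j |: seen, obs')))).

Fixpoint run (j0 : 'I_m) (i0 : 'I_n) (k : nat) (st : gstate) : dist R gstate :=
  match k with
  | 0 => dret R st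
  | k'.+1 => dbind (step j0 i0 st) (run j0 i0 k')
  end.

Definition rand_order_process (j0 : 'I_m) (i0 : 'I_n) : dist R gstate :=
  run j0 i0 m (setT, set0, None).
End Algorithm.

Definition integral_q (R : realFieldType) (m : nat) : 'I_m -> 'I_m -> R :=
  fun _ _ => (m%:R)^-1.

(* Main.v *)
Require Import Defs.
From HB Require Import structures.
From mathcomp Require Import all_boot all_order all_algebra.
From mathcomp Require Import ring lra.
Import Order.TTheory GRing.Theory Num.Theory.
Set Implicit Arguments. Unset Strict Implicit. Unset Printing Implicit Defensive.
Local Open Scope ring_scope.


Section DistLemmas.
Variable R : realFieldType.
Definition Ex (A : Type) (d : dist R A) (h : A -> R) : R := \sum_(w <- d) w.1 * h w.2.
Definition mass (A : Type) (d : dist R A) : R := \sum_(w <- d) w.1.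
Definition nn (A : Type) (d : dist R A) : bool := all (fun w => 0 <= w.1) d.

Lemma Ex_ret A (a : A) h : Ex (dret R a) h = h a.
Proof. by rewrite /Ex /dret big_cons big_nil mul1r addr0. Qed.

Lemma Ex_bind A B (d : dist R A) (f : A -> dist R B) h :
  Ex (dbind d f) h = Ex d (fun a => Ex (f a) h).
Proof.
rewrite /Ex; elim: d => [|w d IH]; first by rewrite /dbind !big_nil.
rewrite /dbind /= big_cat /= -/(dbind d f) IH big_cons big_map big_distrr /=.
by congr (_ + _); apply: eq_bigr => v _; rewrite mulrA.
Qed.

Lemma eq_Ex A (d : dist R A) h h' : (forall a, h a = h' a) -> Ex d h = Ex d h'.
Proof. by move=> H; apply: eq_bigr => w _; rewrite H. Qed.

Lemma Ex_const A (d : dist R A) h c : mass d = 1 -> (forall a, h a = c) -> Ex d h = c.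
Proof.
move=> Hm H; rewrite /Ex (eq_bigr (fun w => w.1 * c)); last by move=> w _; rewrite H.
by rewrite -mulr_suml -/(mass d) Hm mul1r.
Qed.

Lemma Ex_le A (d : dist R A) h h' : nn d -> (forall a, h a <= h' a) -> Ex d h <= Ex d h'.
Proof.
rewrite /Ex /nn => Hn H; elim: d Hn => [|w d IH] /=; first by rewrite !big_nil.
move=> /andP[H0 Hd]; rewrite !big_cons; apply: lerD; last exact: IH.
exact: ler_wpM2l.
Qed.

Lemma Ex_le_const A (d : dist R A) h c : nn d -> mass d = 1 -> (forall a, h a <= c) -> Ex d h <= c.
Proof.
move=> Hn Hm H; rewrite -(@Ex_const _ d (fun _ => c) c Hm (fun _ => erefl)).
exact: Ex_le.
Qed.

Lemma mass_Ex A (d : dist R A) : mass d = Ex d (fun _ => 1).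
Proof. by rewrite /Ex /mass; apply: eq_bigr => w _; rewrite mulr1. Qed.

Lemma mass_ret A (a : A) : mass (dret R a) = 1.
Proof. by rewrite mass_Ex Ex_ret. Qed.

Lemma mass_bind A B (d : dist R A) (f : A -> dist R B) :
  mass d = 1 -> (forall a, mass (f a) = 1) -> mass (dbind d f) = 1.
Proof.
move=> Hd Hf; rewrite mass_Ex Ex_bind; apply: Ex_const => // a.
by rewrite -mass_Ex.
Qed.

Lemma nn_ret A (a : A) : nn (dret R a).
Proof. by rewrite /nn /= ler01. Qed.

Lemma nn_bind A B (d : dist R A) (f : A -> dist R B) :
  nn d -> (forall a, nn (f a)) -> nn (dbind d f).
Proof.
rewrite /nn; elim: d => [|w d IH] //= /andP[H0 Hd] Hf.
rewrite /dbind /= all_cat -/(dbind d f) IH // andbT all_map.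
by apply: sub_all (Hf w.2) => v /= Hv; apply: mulr_ge0.
Qed.

Lemma sum_one_seq (T : Type) (l : seq T) : \sum_(a <- l) (1 : R) = (size l)%:R.
Proof. by elim: l => [|a l IH]; rewrite ?big_nil // big_cons IH /= mulrS. Qed.

Lemma Ex_unif A (l : seq A) h : Ex (duniform R l) h = (size l)%:R^-1 * \sum_(a <- l) h a.
Proof. by rewrite /Ex /duniform big_map big_distrr. Qed.

Lemma mass_unif A (l : seq A) : (0 < size l)%N -> mass (duniform R l) = 1.
Proof.
move=> Hl; rewrite mass_Ex Ex_unif sum_one_seq mulVf //.
by rewrite pnatr_eq0 -lt0n.
Qed.

Lemma Ex_coin q h : Ex (dcoin q) h = q * h true + (1 - q) * h false.
Proof. by rewrite /Ex /dcoin !big_cons big_nil addr0. Qed.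

Lemma mass_coin q : mass (dcoin q) = 1.
Proof. by rewrite mass_Ex Ex_coin !mulr1 addrC subrK. Qed.

Lemma nn_coin q : 0 <= q <= 1 -> nn (dcoin q).
Proof. by move=> /andP[H0 H1]; rewrite /nn /= H0 subr_ge0 H1. Qed.
End DistLemmas.

Section Model.
Variable R : realFieldType.
Variables (n m : nat).
Variable Sfam : {set {set 'I_n}}.
Variable p : 'I_m -> 'I_n -> {set 'I_n} -> R.
Variable x : 'I_m -> {set 'I_n} -> R.
Variable alpha : R.
Variable ell : 'I_m -> nat.
Variable S0 : {set 'I_n}.
Variable i0 : 'I_n.
Hypothesis HS : downward_closed_nonempty Sfam.
Hypothesis Hp : choice_model Sfam p.
Hypothesis Hx0 : forall j S, S \in Sfam -> 0 <= x j S.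
Hypothesis Hx1 : forall j S, S \in Sfam -> x j S <= 1.
Hypothesis Halpha : 1 <= alpha.

Lemma alpha_gt0 : 0 < alpha.
Proof. exact: lt_le_trans ltr01 Halpha. Qed.

Lemma q01 j Sa : Sa \in Sfam -> 0 <= x j Sa / alpha <= 1.
Proof.
move=> HSa; have Ha := alpha_gt0.
apply/andP; split; first by rewrite divr_ge0 ?Hx0 ?ltW.
rewrite ler_pdivrMr // mul1r.
exact: le_trans (Hx1 j HSa) Halpha.
Qed.

Lemma mass_purchase j A : mass (purchase p j A) = 1.
Proof.
rewrite /mass /purchase big_cat big_map big_cons big_nil /=.
by rewrite big_enum addr0 addrC subrK.
Qed.

Lemma nn_purchase j A : (A == set0) || (A \in Sfam) -> nn (purchase p j A).
Proof.
case/orP => [/eqP -> | HA].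
  by rewrite /nn /purchase /= enum_set0 /= big_set0 subr0 ler01.
case: Hp => [H0 [H1 _]].
rewrite /nn /purchase all_cat all_map /= subr_ge0 (H1 j A HA) !andbT.
by apply/allP => i; rewrite mem_enum => Hi /=; apply: H0.
Qed.

Lemma session_cons j avail Sa pi shown k snap :
  session p x alpha ell S0 j avail (Sa :: pi) shown k snap =
  if (ell j <= k)%N then dret R (None, shown, snap) else
    let snap' := if Sa == S0 then Some shown else snap in
    dbind (dcoin (x j Sa / alpha)) (fun b =>
      if b then
        let A := (Sa :&: avail) :\: shown in
        dbind (purchase p j A) (fun o =>
          match o with
          | Some it => dret R (Some it, shown :|: A, snap')
          | None => session p x alpha ell S0 j avail pi (shown :|: A) k.+1 snap'
          end)
      else session p x alpha ell S0 j avail pi shown k snap').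
Proof. by []. Qed.

Lemma mass_session j avail pi shown k snap :
  mass (session p x alpha ell S0 j avail pi shown k snap) = 1.
Proof.
elim: pi shown k snap => [|Sa pi IH] shown k snap; first exact: mass_ret.
cbn [session]; case: ifP => _; first exact: mass_ret.
apply: mass_bind; first exact: mass_coin.
case; last exact: IH.
apply: mass_bind; first exact: mass_purchase.
by case => [it|]; [exact: mass_ret | exact: IH].
Qed.

Lemma nn_session j avail pi shown k snap : all (mem Sfam) pi ->
  nn (session p x alpha ell S0 j avail pi shown k snap).
Proof.
elim: pi shown k snap => [|Sa pi IH] shown k snap; first by move=> _; exact: nn_ret.
move=> /= /andP[HSa Hpi].
cbn [session]; case: ifP => _; first exact: nn_ret.
apply: nn_bind; first exact/nn_coin/q01.
case; last exact: IH.
apply: nn_bind.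
  apply: nn_purchase; case: HS => _ Hdc.
  have [->|Hne] := eqVneq ((Sa :&: avail) :\: shown) set0; first by [].
  apply/orP; right.
  apply: Hdc HSa _ Hne.
  exact: subset_trans (subsetDl _ _) (subsetIl _ _).
by case => [it|]; [exact: nn_ret | exact: IH].
Qed.

Definition hsb (res : option 'I_n * {set 'I_n} * option {set 'I_n}) : R :=
  (shown_before i0 res)%:R.

Lemma snap_fixed j avail pi shown k s : S0 \notin pi ->
  Ex (session p x alpha ell S0 j avail pi shown k (Some s)) hsb = (i0 \in s)%:R.
Proof.
elim: pi shown k => [|Sa pi IH] shown k; first by move=> _; rewrite Ex_ret.
rewrite in_cons negb_or => /andP[Hne Hpi].
cbn [session]; case: ifP => _; first by rewrite Ex_ret.
rewrite /= eq_sym (negbTE Hne) Ex_bind.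
apply: Ex_const; first exact: mass_coin.
case; last exact: IH.
rewrite Ex_bind; apply: Ex_const; first exact: mass_purchase.
by case => [it|]; [rewrite Ex_ret | exact: IH].
Qed.

Definition gb j (pi : seq {set 'I_n}) : R :=
  \sum_(Sa <- take (index S0 pi) pi | i0 \in Sa) x j Sa / alpha.

Lemma gb_ge0 j pi : all (mem Sfam) pi -> 0 <= gb j pi.
Proof.
move=> H; rewrite /gb big_seq_cond; apply: sumr_ge0 => Sa /andP[Hin _].
have /(allP H) HSa : Sa \in pi := mem_take Hin.
by case/andP: (q01 j HSa).
Qed.

Lemma ind_le (a b c : bool) : (a ==> b || c) -> (a%:R : R) <= b%:R + c%:R.
Proof. by case: a; case: b; case: c => //= _; rewrite ?mulr1n ?mulr0n; lra. Qed.

Lemma sess_bound j avail pi shown k : uniq pi -> all (mem Sfam) pi ->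
  Ex (session p x alpha ell S0 j avail pi shown k None) hsb <= (i0 \in shown)%:R + gb j pi.
Proof.
elim: pi shown k => [|Sa pi IH] shown k.
  by move=> _ _; rewrite Ex_ret /gb /= big_nil addr0.
move=> Hu0 Hall0; move: (Hu0) (Hall0) => /= /andP[HSa0 Hu] /andP[HSa Hpi].
have Hg0 := gb_ge0 j Hpi.
cbn [session]; case: ifP => _.
  by rewrite Ex_ret /hsb /shown_before /= lerDl; apply: gb_ge0.
have [HeqS|Hne] := eqVneq Sa S0.
  have -> : gb j (Sa :: pi) = 0 by rewrite /gb /= HeqS eqxx big_nil.
  rewrite addr0 le_eqVlt; apply/orP; left; apply/eqP.
  rewrite /= Ex_bind; apply: Ex_const; first exact: mass_coin.
  have HS0 : S0 \notin pi by rewrite -HeqS.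
  case; last exact: snap_fixed.
  rewrite Ex_bind; apply: Ex_const; first exact: mass_purchase.
  by case => [it|]; [rewrite Ex_ret | exact: snap_fixed].
have Egb : gb j (Sa :: pi) = (if i0 \in Sa then x j Sa / alpha else 0) + gb j pi.
  rewrite /gb /= (negbTE Hne) /= big_cons.
  by case: (i0 \in Sa); rewrite ?add0r.
case/andP: (q01 j HSa) => Hq0 Hq1.
have Hq1' : 0 <= 1 - x j Sa / alpha by rewrite subr_ge0.
rewrite /= Ex_bind Ex_coin.
set A := (Sa :&: avail) :\: shown.
have HA : (i0 \in shown :|: A) ==> (i0 \in shown) || (i0 \in Sa).
  apply/implyP; rewrite /A !inE => /orP[->//|/and3P[_ -> _]]; by rewrite orbT.
have H1 : Ex (dbind (purchase p j A) (fun o => match o with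
          | Some it => dret R (Some it, shown :|: A, None)
          | None => session p x alpha ell S0 j avail pi (shown :|: A) k.+1 None
          end)) hsb <= (i0 \in shown)%:R + (i0 \in Sa)%:R + gb j pi.
  rewrite Ex_bind; apply: Ex_le_const; last first.
  - case => [it|].
      rewrite Ex_ret /hsb /shown_before /=.
      apply: le_trans (ind_le HA) _; by rewrite lerDl.
    apply: le_trans (IH _ _ Hu Hpi) _; rewrite lerD2r; exact: ind_le.
  - exact: mass_purchase.
  - apply: nn_purchase; case: HS => _ Hdc.
    have [->|HneA] := eqVneq A set0; first by [].
    apply/orP; right; apply: Hdc HSa _ HneA.
    exact: subset_trans (subsetDl _ _) (subsetIl _ _).
have H2 := IH shown k Hu Hpi.
apply: le_trans (lerD (ler_wpM2l Hq0 H1) (ler_wpM2l Hq1' H2)) _.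
rewrite Egb; case: (i0 \in Sa) => /=; rewrite ?mulr1n ?mulr0n; lra.
Qed.

Lemma Ex_subc A (d : dist R A) h c : mass d = 1 -> Ex d (fun a => h a - c) = Ex d h - c.
Proof.
move=> Hm; rewrite /Ex (eq_bigr (fun w => w.1 * h w.2 - w.1 * c)); last by move=> w _; rewrite mulrBr.
by rewrite sumrB -mulr_suml -/(mass d) Hm mul1r.
Qed.

Variable j0 : 'I_m.
Hypothesis Hc5 : \sum_(S in Sfam | i0 \in S) x j0 S <= 1.
Hypothesis HS0 : S0 \in Sfam.
Hypothesis Hi0 : i0 \in S0.

Definition P := permutations (enum Sfam).

Lemma gb_pair pi : pi \in P -> gb j0 pi + gb j0 (rev pi) <= alpha^-1.
Proof.
rewrite mem_permutations => Hperm.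
have Hu : uniq pi by rewrite (perm_uniq Hperm) enum_uniq.
have Hin : S0 \in pi by rewrite (perm_mem Hperm) mem_enum.
have Htot : \sum_(Sa <- pi | i0 \in Sa) x j0 Sa / alpha <= alpha^-1.
  rewrite (perm_big _ Hperm) big_enum_cond -mulr_suml.
  rewrite -[X in _ <= X]mul1r; apply: ler_wpM2r => //.
  by rewrite invr_ge0 ltW // alpha_gt0.
move: Hu Htot; case/splitPr: Hin => p1 p2.
rewrite cat_uniq /= => /and3P[_ /norP[H1 _] /andP[H2 _]].
have E1 : gb j0 (p1 ++ S0 :: p2) = \sum_(Sa <- p1 | i0 \in Sa) x j0 Sa / alpha.
  by rewrite /gb index_cat (negbTE H1) /= eqxx addn0 take_size_cat.
have E2 : gb j0 (rev (p1 ++ S0 :: p2)) = \sum_(Sa <- p2 | i0 \in Sa) x j0 Sa / alpha.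
  rewrite rev_cat rev_cons cat_rcons /gb index_cat mem_rev (negbTE H2) /= eqxx addn0.
  by rewrite take_size_cat ?size_rev // big_rev.
rewrite E1 E2 big_cat big_cons /= Hi0 => Htot.
have HS0x : 0 <= x j0 S0 / alpha by case/andP: (q01 j0 HS0).
apply: le_trans Htot; lra.
Qed.

Definition c : R := (2 * alpha)^-1.

Lemma size_P : (0 < size P)%N.
Proof.
have : enum Sfam \in P by rewrite mem_permutations perm_refl.
by rewrite lt0n size_eq0; apply: contraTneq => ->.
Qed.

Lemma sum_gb : \sum_(pi <- P) gb j0 pi <= (size P)%:R * c.
Proof.
have Hrev : \sum_(pi <- P) gb j0 (rev pi) = \sum_(pi <- P) gb j0 pi.
  rewrite -(big_map rev predT (gb j0)); apply: perm_big.
  apply: uniq_perm.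
  - rewrite map_inj_uniq ?permutations_uniq //; exact: (can_inj revK).
  - exact: permutations_uniq.
  move=> pi; apply/mapP/idP => [[pi' Hpi' ->]|Hpi].
    by move: Hpi'; rewrite !mem_permutations perm_rev.
  exists (rev pi); last by rewrite revK.
  by move: Hpi; rewrite !mem_permutations perm_rev.
have H2 : \sum_(pi <- P) (gb j0 pi + gb j0 (rev pi)) <= \sum_(pi <- P) alpha^-1.
  rewrite big_seq_cond [X in _ <= X]big_seq_cond; apply: ler_sum => pi /andP[Hpi _].
  exact: gb_pair.
have Hc : \sum_(pi <- P) alpha^-1 = (size P)%:R * alpha^-1.
  by rewrite -sum_one_seq mulr_suml; apply: eq_bigr => _ _; rewrite mul1r.
rewrite big_split /= Hrev Hc in H2.
have -> : (size P)%:R * c = ((size P)%:R * alpha^-1) / 2.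
  by rewrite /c invfM mulrA [X in _ = X]mulrC mulrA [2^-1 * _]mulrC.
lra.
Qed.

Lemma nn_bind_unif (A : eqType) (B : Type) (l : seq A) (f : A -> dist R B) :
  (forall a, a \in l -> nn (f a)) -> nn (dbind (duniform R l) f).
Proof.
move=> Hf.
have Hn : nn (duniform R l) by rewrite /nn /duniform all_map; apply/allP => a _ /=; rewrite invr_ge0 ler0n.
move: Hn.
have : all (fun w => nn (f w.2)) (duniform R l).
  by rewrite /duniform all_map; apply/allP => a Ha /=; exact: Hf.
elim: (duniform R l) => [|w d IH] //= /andP[Hw Ha] /andP[H0 Hd].
move: (IH Ha Hd); rewrite /nn /dbind /= all_cat -/(dbind d f) => ->; rewrite andbT all_map.
by apply: sub_all Hw => v /= Hv; apply: mulr_ge0.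
Qed.

Definition f (st : gstate n m) : R := (st.2 == Some true)%:R - c * (st.2 != None)%:R.

Lemma f_some (a : {set 'I_n}) (s : {set 'I_m}) (b : bool) : f (a, s, Some b) = b%:R - c.
Proof. by case: b; rewrite /f /= ?mulr1. Qed.

Lemma run_S k st : run Sfam p x alpha ell S0 j0 i0 k.+1 st =
  dbind (step Sfam p x alpha ell S0 j0 i0 st) (run Sfam p x alpha ell S0 j0 i0 k).
Proof. by []. Qed.

Lemma step_eq (avail : {set 'I_n}) (seen : {set 'I_m}) (obs : option bool) : step Sfam p x alpha ell S0 j0 i0 (avail, seen, obs) =
  dbind (duniform R (enum 'I_m)) (fun j =>
    if j \in seen then dret R (avail, seen, obs) else
    dbind (duniform R P) (fun pi =>
      dbind (session p x alpha ell S0 j avail pi set0 0 None) (fun res =>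
        dret R ((if res.1.1 is Some it then avail :\ it else avail), j |: seen,
                if j == j0 then Some (shown_before i0 res) else obs)))).
Proof. by []. Qed.

Lemma Hm : (0 < size (enum 'I_m))%N.
Proof. by rewrite size_enum_ord (leq_ltn_trans (leq0n j0) (ltn_ord j0)). Qed.

Lemma P_all pi : pi \in P -> all (mem Sfam) pi.
Proof.
rewrite mem_permutations => Hperm; apply/allP => S.
by rewrite (perm_mem Hperm) mem_enum.
Qed.

Lemma P_uniq pi : pi \in P -> uniq pi.
Proof. by rewrite mem_permutations => Hperm; rewrite (perm_uniq Hperm) enum_uniq. Qed.

Lemma run_some k (avail : {set 'I_n}) (seen : {set 'I_m}) (b : bool) : j0 \in seen ->
  Ex (run Sfam p x alpha ell S0 j0 i0 k (avail, seen, Some b)) f = b%:R - c.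
Proof.
elim: k avail seen => [|k IH] avail seen Hs; first by rewrite Ex_ret f_some.
rewrite run_S Ex_bind step_eq Ex_bind; apply: Ex_const; first exact: mass_unif Hm.
move=> j; case: ifP => Hj; first by rewrite Ex_ret IH.
have Hne : (j == j0) = false by apply/eqP => E; rewrite E Hs in Hj.
rewrite Ex_bind; apply: Ex_const; first exact: mass_unif size_P.
move=> pi; rewrite Ex_bind; apply: Ex_const; first exact: mass_session.
by move=> res; rewrite Ex_ret Hne IH // in_setU1 Hs orbT.
Qed.

Lemma run_none k (avail : {set 'I_n}) (seen : {set 'I_m}) : j0 \notin seen ->
  Ex (run Sfam p x alpha ell S0 j0 i0 k (avail, seen, None)) f <= 0.
Proof.
elim: k avail seen => [|k IH] avail seen Hs.
  by rewrite Ex_ret /f /= mulr0 subr0.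
rewrite run_S Ex_bind step_eq Ex_bind Ex_unif.
apply: mulr_ge0_le0; first by rewrite invr_ge0 ler0n.
apply: sumr_le0 => j _.
case: ifP => Hj; first by rewrite Ex_ret IH.
rewrite Ex_bind Ex_unif.
apply: mulr_ge0_le0; first by rewrite invr_ge0 ler0n.
have [Heq|Hne] := eqVneq j j0.
  apply: (le_trans (y := \sum_(pi <- P) (gb j0 pi - c))).
    rewrite big_seq_cond [X in _ <= X]big_seq_cond; apply: ler_sum => pi /andP[Hpi _].
    rewrite Ex_bind.
    rewrite (eq_Ex _ (h' := fun res => hsb res - c)); last first.
      by move=> res; rewrite Ex_ret /= run_some // in_setU1 Heq eqxx.
    rewrite Ex_subc ?mass_session // lerD2r.
    rewrite Heq; apply: le_trans (@sess_bound j0 avail pi set0 0 (P_uniq Hpi) (P_all Hpi)) _.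
    by rewrite in_set0 add0r.
  rewrite sumrB subr_le0.
  have Hc : \sum_(pi <- P) c = (size P)%:R * c.
    by rewrite -sum_one_seq mulr_suml; apply: eq_bigr => _ _; rewrite mul1r.
  by rewrite Hc; apply: sum_gb.
rewrite big_seq_cond; apply: sumr_le0 => pi /andP[Hpi _].
rewrite Ex_bind; apply: Ex_le_const.
- exact: nn_session (P_all Hpi).
- exact: mass_session.
move=> res; rewrite Ex_ret /=; apply: IH.
by rewrite in_setU1 negb_or eq_sym Hne Hs.
Qed.

Lemma nn_unif (A : Type) (l : seq A) : nn (duniform R l).
Proof.
rewrite /nn /duniform; have : 0 <= (size l)%:R^-1 :> R by rewrite invr_ge0 ler0n.
move: ((size l)%:R^-1) => q Hq; elim: l => //= a l ->; by rewrite Hq.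
Qed.

Lemma nn_run k st : nn (run Sfam p x alpha ell S0 j0 i0 k st).
Proof.
elim: k st => [|k IH] st; first exact: nn_ret.
rewrite run_S; apply: nn_bind (IH).
case: st => [[avail seen] obs]; rewrite step_eq.
apply: nn_bind; first exact: nn_unif.
move=> j; case: ifP => _; first exact: nn_ret.
apply: nn_bind_unif => pi Hpi; apply: nn_bind; first exact: nn_session (P_all Hpi).
move=> ?; exact: nn_ret.
Qed.

Lemma dprob_ge0 (A : Type) (d : dist R A) E : nn d -> 0 <= dprob d E.
Proof.
rewrite /nn /dprob; elim: d => [|w d IH] /=; first by rewrite big_nil.
move=> /andP[H0 Hd]; rewrite big_cons; apply: addr_ge0; last exact: IH.
by case: ifP.
Qed.

Lemma Ex_f (d : dist R (gstate n m)) :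
  Ex d f = dprob d (fun st => st.2 == Some true) - c * dprob d (fun st => st.2 != None).
Proof.
rewrite /Ex /dprob mulr_sumr -sumrB; apply: eq_bigr => w _.
by rewrite /f; case: (w.2.2) => [[]|] /=; rewrite ?mulr1n ?mulr0n; ring.
Qed.

Lemma final :
  dcondprob (run Sfam p x alpha ell S0 j0 i0 m (setT, set0, None))
    (fun st => st.2 == Some true) (fun st => st.2 != None) <= c.
Proof.
set d := run _ _ _ _ _ _ _ _ _ _.
have Hle : Ex d f <= 0 by apply: run_none; rewrite in_set0.
rewrite Ex_f subr_le0 in Hle.
have HEC : dprob d (fun st => (st.2 == Some true) && (st.2 != None)) =
           dprob d (fun st => st.2 == Some true).
  by apply: eq_bigr => w _; case: (w.2.2) => [[]|].
rewrite /dcondprob HEC.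
have HC0 : 0 <= dprob d (fun st => st.2 != None) by apply: dprob_ge0; exact: nn_run.
have Hc0 : 0 < c by rewrite /c invr_gt0 mulr_gt0 // alpha_gt0.
have [HC|HC] := eqVneq (dprob d (fun st => st.2 != None)) 0.
  by rewrite HC invr0 mulr0 ltW.
have HCp : 0 < dprob d (fun st => st.2 != None) by rewrite lt_def HC HC0.
by rewrite ler_pdivrMr // mulrC.
Qed.
End Model.

Theorem lemma4p5 (R : realFieldType) (n m : nat)
  (Sfam : {set {set 'I_n}})
  (p : 'I_m -> 'I_n -> {set 'I_n} -> R)
  (r : 'I_n -> 'I_m -> R) (ell : 'I_m -> nat)
  (x : 'I_m -> {set 'I_n} -> R) (alpha : R)
  (hS : downward_closed_nonempty Sfam)
  (hp : choice_model Sfam p)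
  (hr : forall i j, 0 <= r i j)
  (hell : forall j, (0 < ell j)%N)
  (hx : lp_optimal Sfam p (@integral_q R m) r ell x)
  (halpha : 1 <= alpha)
  (j : 'I_m) (S : {set 'I_n}) (i : 'I_n)
  (hSin : S \in Sfam) (hi : i \in S) :
  dcondprob (rand_order_process Sfam p x alpha ell S j i)
    (fun st => st.2 == Some true)
    (fun st => st.2 != None)
  <= (2 * alpha)^-1.
Proof.
case: hx => [[Hx0 [_ [_ [_ Hc5]]]] _].
have Hx1 : forall j S, S \in Sfam -> x j S <= 1.
  move=> j' S' HS'.
  have : S' != set0 by apply: contraTneq HS' => ->; case: hS.
  case/set0Pn => i' Hi'.
  apply: le_trans (Hc5 i' j').
  rewrite (bigD1 S') ?HS' ?Hi' //= lerDl.
  by apply: sumr_ge0 => S'' /andP[/andP[H _] _]; exact: Hx0.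
exact: (final ell hS hp Hx0 Hx1 halpha (Hc5 i j) hSin hi).
Qed.
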